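(* Let $G$ be a countable discrete group acting minimally by homeomorphisms on a compact Hausdorff space $X$, and let $\mu\in P(G,C(X))$ have full support. Then every $\mu$-stationary state on $C(X)$ is faithful.
   Context: Minimal means every orbit is dense; $(g\cdot f)(x)=f(g^{-1}x)$. A generalized $(G,C(X))$-probability measure is a formal sum $\mu=\sum_{i\in I}f_is_if_i$ with $I$ an index set, $s_i\in G$ (repetitions allowed), $f_i\in C(X)$, $f_i\ge0$, $f_i\ne0$, $\sum_if_i^2=1$; $P(G,C(X))$ is the set of these. For $h\in C(X)$, $\mu h=\sum_if_i(s_i\cdot h)f_i$; a state $\tau$ on $C(X)$ is $\mu$-stationary if $\tau(\mu h)=\tau(h)$ for all $h$. $\mu$ has full support if, writing $I_s=\{i: s_i=s\}$, for each $s\in G$ there is $\delta>0$ with $\sum_{i\in I_s}f_i^2\ge\delta$ (equivalently, for all $s\in G$, $x\in X$ there is $i\in I_s$ with $f_i(x)>0$). *)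

(* Defs.v *)
From HB Require Import structures.
From mathcomp Require Import all_boot all_order all_algebra.
From mathcomp Require Import all_classical all_reals all_analysis.
Set Implicit Arguments. Unset Strict Implicit. Unset Printing Implicit Defensive.
Import Order.TTheory GRing.Theory Num.Theory numFieldNormedType.Exports.
Local Open Scope classical_set_scope.
Local Open Scope ring_scope.

Definition is_group (G : Type) (mul : G -> G -> G) (one : G) (inv : G -> G) : Prop :=
  [/\ (forall a b c, mul a (mul b c) = mul (mul a b) c),
      (forall a, mul one a = a),
      (forall a, mul a one = a),
      (forall a, mul (inv a) a = one) &
      (forall a, mul a (inv a) = one)].

(* A left action of G on X by homeomorphisms (each act g is continuous,
   with continuous inverse act (inv g) by the action axioms). *)
Definition is_homeo_action (G : Type) (X : topologicalType)
    (mul : G -> G -> G) (one : G) (act : G -> X -> X) : Prop :=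
  [/\ (forall x, act one x = x),
      (forall g h x, act (mul g h) x = act g (act h x)) &
      (forall g, continuous (act g))].

Definition minimal_action (G : Type) (X : topologicalType) (act : G -> X -> X) : Prop :=
  forall x : X, closure (range (fun g => act g x)) = [set: X].

Definition gact (G : Type) (X : Type) (R : Type) (inv : G -> G) (act : G -> X -> X)
    (g : G) (h : X -> R) : X -> R := fun x => h (act (inv g) x).

(* Generalized (G, C(X))-probability measure  mu = sum_{i in I} f_i s_i f_i. *)
Definition is_gen_prob_measure (R : realType) (G : Type) (X : topologicalType)
    (I : choiceType) (s : I -> G) (f : I -> X -> R) : Prop :=
  [/\ (forall i, continuous (f i)),
      (forall i x, 0 <= f i x),
      (forall i, exists x, f i x != 0) &
      (forall x, (\esum_(i in [set: I]) ((f i x) ^+ 2)%:E = 1%:E)%E)].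

Definition full_support (R : realType) (G : Type) (X : topologicalType)
    (I : choiceType) (s : I -> G) (f : I -> X -> R) : Prop :=
  forall g : G, exists2 delta : R, 0 < delta &
    forall x, (delta%:E <= \esum_(i in [set i | s i = g]) ((f i x) ^+ 2)%:E)%E.

Definition has_unordered_sum (R : realType) (I : choiceType) (a : I -> R) (l : R) : Prop :=
  forall e : R, 0 < e -> exists2 F0 : set I, finite_set F0 &
    forall F : set I, finite_set F -> F0 `<=` F -> `|\sum_(i \in F) a i - l| < e.

Definition mu_apply (R : realType) (G : Type) (X : topologicalType) (I : choiceType)
    (inv : G -> G) (act : G -> X -> X) (s : I -> G) (f : I -> X -> R)
    (h : X -> R) : X -> R :=
  fun x => xget 0 [set l | has_unordered_sum (fun i => f i x * gact inv act (s i) h x * f i x) l].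

Definition is_state (R : realType) (X : topologicalType) (tau : (X -> R) -> R) : Prop :=
  [/\ (forall (a : R) (h k : X -> R), continuous h -> continuous k ->
         tau (fun x => a * h x + k x) = a * tau h + tau k),
      (forall h : X -> R, continuous h -> (forall x, 0 <= h x) -> 0 <= tau h) &
      tau (fun _ => 1) = 1].

Definition is_stationary (R : realType) (G : Type) (X : topologicalType) (I : choiceType)
    (inv : G -> G) (act : G -> X -> X) (s : I -> G) (f : I -> X -> R)
    (tau : (X -> R) -> R) : Prop :=
  forall h : X -> R, continuous h -> tau (mu_apply inv act s f h) = tau h.

Definition is_faithful (R : realType) (X : topologicalType) (tau : (X -> R) -> R) : Prop :=
  forall h : X -> R, continuous h -> (forall x, 0 <= h x) -> (exists x, h x != 0) ->
    0 < tau h.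

(* Main.v *)
Require Import Defs.
From HB Require Import structures.
From mathcomp Require Import all_boot all_order all_algebra.
From mathcomp Require Import all_classical all_reals all_analysis.
From mathcomp Require Import finmap.
From mathcomp Require Import ring lra.
Set Implicit Arguments. Unset Strict Implicit. Unset Printing Implicit Defensive.
Import Order.TTheory GRing.Theory Num.Theory numFieldNormedType.Exports.
Local Open Scope classical_set_scope.
Local Open Scope ring_scope.

Definition pointedX {X : topologicalType} (x0 : X) : Type := X.
HB.instance Definition _ (X : topologicalType) (x0 : X) :=
  Topological.copy (pointedX x0) X.
HB.instance Definition _ (X : topologicalType) (x0 : X) :=
  isPointed.Build (pointedX x0) x0.

Lemma cover_fin (X : topologicalType) (J : choiceType) (D : set J) (V : J -> set X) :
  compact [set: X] -> (forall j, D j -> open (V j)) -> (forall x, exists2 j, D j & V j x) ->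
  exists D' : {fset J}, (forall j, j \in D' -> D j) /\ forall x, exists2 j, j \in D' & V j x.
Proof.
have [[x0 _]|X0] := pselect (exists x : X, True); last first.
  move=> _ _ _; exists fset0; split => [j|x]; first by rewrite in_fset0.
  by exfalso; apply: X0; exists x.
move=> cpt0 Vo cov.
have cpt : cover_compact [set: pointedX x0] by rewrite -compact_cover.
have [|D' D'D H] := cpt J D V Vo.
  by move=> x _; have [j Dj Vj] := cov x; exists j.
exists D'; split => [j /D'D|x]; first exact: set_mem.
by have [j /= Dj Vj] := H x I; exists j.
Qed.

Lemma fsum_le_sub (R : realType) (I : choiceType) (a : I -> R) (A B : set I) :
  finite_set A -> finite_set B -> A `<=` B -> (forall i, 0 <= a i) ->
  \sum_(i \in A) a i <= \sum_(i \in B) a i.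
Proof.
move=> fA fB AB a0; rewrite -lee_fin -!fsumEFin //.
apply: lee_fsum_nneg_subset => //; first by apply/subsetP.
by move=> t _; rewrite lee_fin.
Qed.

Lemma fsum_cont (R : realType) (X : topologicalType) (I : choiceType) (F : set I)
  (a : I -> X -> R) : finite_set F -> (forall i, continuous (a i)) ->
  continuous (fun x => \sum_(i \in F) a i x).
Proof.
move=> fF ac.
have -> : (fun x => \sum_(i \in F) a i x) = (fun x => \sum_(i <- fset_set F) a i x).
  by apply/funext => x; rewrite fsbig_finite.
elim: (fset_set F : seq I) => [|j s IH].
  under eq_fun do rewrite big_nil; exact: cst_continuous.
under eq_fun do rewrite big_cons.
by move=> x; apply: continuousD; [exact: ac|exact: IH].
Qed.

Lemma open_gt_cont (R : realType) (X : topologicalType) (f : X -> R) (r : R) :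
  continuous f -> open [set x | r < f x].
Proof.
move=> fc; rewrite openE => x /= rx.
have /cvgrPdist_lt/(_ (f x - r)) := fc x.
rewrite subr_gt0 => /(_ rx); apply: filterS => y /= H.
have := ler_norm (f x - f y); lra.
Qed.

Lemma dini (R : realType) (X : topologicalType) (I : choiceType) (A : set I)
  (a : I -> X -> R) (c e : R) :
  compact [set: X] -> (forall i, continuous (a i)) -> (forall i x, 0 <= a i x) -> 0 < e ->
  (forall x, (c%:E <= \esum_(i in A) (a i x)%:E)%E) ->
  exists F : set I, [/\ finite_set F, F `<=` A & forall x, c - e < \sum_(i \in F) a i x].
Proof.
move=> cpt ac a0 e0 H.
pose D := [set F : set I | finite_set F /\ F `<=` A].
pose V := fun F : set I => [set x | c - e < \sum_(i \in F) a i x].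
have Vo : forall F, D F -> open (V F).
  by move=> F [fF _]; apply: open_gt_cont; apply: fsum_cont.
have Vc : forall x, exists2 F, D F & V F x.
  move=> x.
  have : ((c - e)%:E < \esum_(i in A) (a i x)%:E)%E.
    by apply: (lt_le_trans _ (H x)); rewrite lte_fin; lra.
  move=> /ereal_sup_gt [_ [F [fF FA] <-]].
  rewrite fsumEFin // lte_fin => HF.
  by exists F.
have [D' [D'D cov]] := @cover_fin X (set I) D V cpt Vo Vc.
exists (\bigcup_(F in [set` D']) F); split.
- apply: bigcup_finite; first exact: finite_fset.
  by move=> F /= /D'D [].
- by move=> i [F /= /D'D [_ FA]] /FA.
- move=> x; have [F FD' VF] := cov x.
  apply: (lt_le_trans VF); apply: fsum_le_sub.
  + by have [] := D'D _ FD'.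
  + apply: bigcup_finite; first exact: finite_fset.
    by move=> F' /= /D'D [].
  + by move=> i Fi; exists F.
  + by move=> i; apply: a0.
Qed.

Lemma fsum_le (R : realType) (I : choiceType) (a b : I -> R) (F : set I) :
  finite_set F -> (forall i, F i -> a i <= b i) ->
  \sum_(i \in F) a i <= \sum_(i \in F) b i.
Proof.
move=> fF ab; rewrite -lee_fin -!fsumEFin //.
by apply: lee_fsum => // i Fi; rewrite lee_fin; apply: ab.
Qed.

Lemma fsumB (R : realType) (I : choiceType) (a b : I -> R) (F : set I) :
  finite_set F -> \sum_(i \in F) (a i - b i) = \sum_(i \in F) a i - \sum_(i \in F) b i.
Proof. by move=> fF; rewrite !fsbig_finite // sumrB. Qed.

Lemma seqsum_cont (R : realType) (X : topologicalType) (J : Type) (r : seq J)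
  (a : J -> X -> R) : (forall j, continuous (a j)) ->
  continuous (fun x => \sum_(j <- r) a j x).
Proof.
move=> ac; elim: r => [|j r IH].
  under eq_fun do rewrite big_nil; exact: cst_continuous.
under eq_fun do rewrite big_cons.
by move=> x; apply: continuousD; [exact: ac|exact: IH].
Qed.

Lemma contM (R : realType) (X : topologicalType) (u v : X -> R) :
  continuous u -> continuous v -> continuous (fun x => u x * v x).
Proof. by move=> uc vc x; apply: cvgM; [exact: uc|exact: vc]. Qed.

Lemma contB (R : realType) (X : topologicalType) (u v : X -> R) :
  continuous u -> continuous v -> continuous (fun x => u x - v x).
Proof. by move=> uc vc x; apply: cvgB; [exact: uc|exact: vc]. Qed.

Lemma us_exists (R : realType) (I : choiceType) (b : I -> R) (B : R) :
  (forall i, 0 <= b i) -> (forall F, finite_set F -> \sum_(i \in F) b i <= B) ->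
  exists l, has_unordered_sum b l.
Proof.
move=> b0 bB.
pose S := [set \sum_(i \in F) b i | F in @finite_set I].
have hS : has_sup S.
  split; first by exists 0; exists set0 => //; rewrite fsbig_set0.
  by exists B => _ [F fF <-]; apply: bB.
exists (sup S) => e e0.
have [_ [F0 fF0 <-] H] := sup_adherent e0 hS.
exists F0 => // F fF F0F.
have h1 := @fsum_le_sub R I b F0 F fF0 fF F0F b0.
have h2 : \sum_(i \in F) b i <= sup S by apply: sup_upper_bound => //; exists F.
rewrite ler0_norm; first lra.
lra.
Qed.

Lemma us_ge (R : realType) (I : choiceType) (b : I -> R) (l : R) :
  (forall i, 0 <= b i) -> has_unordered_sum b l ->
  forall F, finite_set F -> \sum_(i \in F) b i <= l.
Proof.
move=> b0 H F fF; apply/ler_addgt0Pr => e e0.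
have [F0 fF0 HF] := H e e0.
have fU : finite_set (F `|` F0) by rewrite finite_setU.
have := HF _ fU (@subsetUr _ F F0).
have := @fsum_le_sub R I b F (F `|` F0) fF fU (@subsetUl _ F F0) b0.
have := ler_norm (\sum_(i \in F `|` F0) b i - l).
lra.
Qed.

Lemma tau0 (R : realType) (X : topologicalType) (tau : (X -> R) -> R) :
  is_state tau -> tau (fun _ => 0) = 0.
Proof.
case=> lin _ _.
have := lin 1 (fun _ => 0) (fun _ => 0) (@cst_continuous _ _ _) (@cst_continuous _ _ _).
have -> : (fun x : X => 1 * (0:R) + 0) = (fun _ => 0) by apply/funext => x; rewrite mul1r addr0.
lra.
Qed.

Lemma tauZ (R : realType) (X : topologicalType) (tau : (X -> R) -> R) (a : R) (h : X -> R) :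
  is_state tau -> continuous h -> tau (fun x => a * h x) = a * tau h.
Proof.
move=> st hc; have t0 := tau0 st; case: st => lin _ _.
have := lin a h (fun _ => 0) hc (@cst_continuous _ _ _).
have -> : (fun x : X => a * h x + 0) = (fun x => a * h x) by apply/funext => x; rewrite addr0.
by rewrite t0 addr0.
Qed.

Lemma tau_mono (R : realType) (X : topologicalType) (tau : (X -> R) -> R) (h k : X -> R) :
  is_state tau -> continuous h -> continuous k -> (forall x, h x <= k x) -> tau h <= tau k.
Proof.
move=> [lin pos _] hc kc hk.
have := lin 1 (fun x => k x - h x) h (contB kc hc) hc.
have -> : (fun x : X => 1 * (k x - h x) + h x) = k by apply/funext => x; rewrite mul1r subrK.
have := pos (fun x => k x - h x) (contB kc hc).
have H : forall x, 0 <= k x - h x by move=> x; rewrite subr_ge0.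
move=> /(_ H); lra.
Qed.

Lemma tau_sum (R : realType) (X : topologicalType) (tau : (X -> R) -> R) (J : Type)
  (r : seq J) (c : J -> R) (u : J -> X -> R) :
  is_state tau -> (forall j, continuous (u j)) ->
  tau (fun x => \sum_(j <- r) c j * u j x) = \sum_(j <- r) c j * tau (u j).
Proof.
move=> st uc; elim: r => [|j r IH].
  under eq_fun do rewrite big_nil; by rewrite big_nil tau0.
under eq_fun do rewrite big_cons; rewrite big_cons -IH.
case: st => lin _ _; apply: lin => //.
by apply: seqsum_cont => j' x; apply: cvgM; [exact: cvg_cst|exact: uc].
Qed.

Lemma cont_bound (R : realType) (X : topologicalType) (h : X -> R) :
  compact [set: X] -> continuous h -> exists M, 0 < M /\ forall x, h x <= M.
Proof.
move=> cpt hc.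
pose V := fun n : nat => [set x | - (n%:R : R) < - h x].
have Vo : forall n, setT n -> open (V n).
  by move=> n _; apply: open_gt_cont => x; apply: cvgN; apply: hc.
have Vc : forall x, exists2 n, setT n & V n x.
  move=> x; exists (Num.truncn (h x)).+1 => //; rewrite /V /=.
  have := Num.Theory.truncnS_gt (h x); lra.
have [D' [_ cov]] := @cover_fin X nat setT V cpt Vo Vc.
exists ((\max_(n <- D') n)%:R + 1); split.
  have : 0 <= ((\max_(n <- D') n)%:R : R) by [].
  lra.
move=> x; have [n nD Vn] := cov x.
have : (n <= \max_(n <- D') n)%N by exact: (@leq_bigmax_seq _ _ xpredT id n nD isT).
rewrite -(ler_nat R); rewrite /V /= in Vn; lra.
Qed.

Lemma sumsq_le1 (R : realType) (G : Type) (X : topologicalType) (I : choiceType)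
  (s : I -> G) (f : I -> X -> R) :
  is_gen_prob_measure s f -> forall F x, finite_set F -> \sum_(i \in F) f i x ^+ 2 <= 1.
Proof.
case=> _ _ _ H1 F x fF.
rewrite -lee_fin -fsumEFin // -(H1 x); apply: esum_ge.
by exists F => //; split.
Qed.

Lemma mu_us (R : realType) (G : Type) (X : topologicalType) (I : choiceType)
  (inv : G -> G) (act : G -> X -> X) (s : I -> G) (f : I -> X -> R) (h : X -> R) (M : R) :
  is_gen_prob_measure s f -> (forall x, 0 <= h x) -> (forall x, h x <= M) ->
  forall x, has_unordered_sum (fun i => f i x * gact inv act (s i) h x * f i x)
                              (mu_apply inv act s f h x).
Proof.
move=> gp h0 hM x; rewrite /mu_apply; apply: xgetPex.
have f0 : forall i x, 0 <= f i x by case: gp.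
apply: (@us_exists _ _ _ M).
  by move=> i; rewrite /gact; apply: mulr_ge0 => //; apply: mulr_ge0.
move=> F fF.
have M0 : 0 <= M by apply: le_trans (hM x).
apply: (@le_trans _ _ (\sum_(i \in F) M * f i x ^+ 2)).
  apply: fsum_le => // i _; rewrite /gact.
  have := f0 i x; have := hM (act (inv (s i)) x); have := h0 (act (inv (s i)) x).
  rewrite expr2; nra.
rewrite -mulr_fsumr; have := sumsq_le1 gp x fF; nra.
Qed.

Lemma mu_cont (R : realType) (G : Type) (X : topologicalType) (I : choiceType)
  (mul : G -> G -> G) (one : G)
  (inv : G -> G) (act : G -> X -> X) (s : I -> G) (f : I -> X -> R) (h : X -> R) (M : R) :
  compact [set: X] -> is_homeo_action mul one act -> is_gen_prob_measure s f ->
  continuous h -> (forall x, 0 <= h x) -> 0 < M -> (forall x, h x <= M) ->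
  continuous (mu_apply inv act s f h).
Proof.
move=> cpt [_ _ actc] gp hc h0 M0 hM.
have f0 : forall i x, 0 <= f i x by case: gp.
have fc : forall i, continuous (f i) by case: gp.
have H1 : forall x, (\esum_(i in [set: I]) ((f i x)^+2)%:E = 1%:E)%E by case: gp.
have us := mu_us inv act gp h0 hM.
set m := mu_apply inv act s f h in us *.
pose b := fun i x => f i x * gact inv act (s i) h x * f i x.
pose T := fun F x => \sum_(i \in F) b i x.
have b0 : forall i x, 0 <= b i x.
  by move=> i x; rewrite /b /gact; apply: mulr_ge0 => //; apply: mulr_ge0.
have hgc : forall g, continuous (fun x => h (act (inv g) x)).
  by move=> g x; apply: continuous_comp; [apply: actc|apply: hc].
have bc : forall i, continuous (b i).
  by move=> i; apply: contM => //; apply: contM => //; apply: hgc.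
have Tle : forall F x, finite_set F -> T F x <= m x.
  by move=> F x fF; exact: (@us_ge _ _ (b ^~ x) (m x) (fun i => b0 i x) (us x) F fF).
have unif : forall e, 0 < e -> exists F1, finite_set F1 /\ forall y, m y <= T F1 y + M * e.
  move=> e e0.
  have sqc : forall i, continuous (fun x => f i x ^+ 2) by move=> i; apply: contM.
  have sq0 : forall i x, 0 <= f i x ^+ 2 by move=> i x; apply: sqr_ge0.
  have sqe : forall x, (1%:E <= \esum_(i in [set: I]) ((f i x)^+2)%:E)%E.
    by move=> x; rewrite H1.
  have [F1 [fF1 _ HF1]] := @dini R X I setT (fun i x => f i x ^+ 2) 1 e cpt sqc sq0 e0 sqe.
  exists F1; split => // y.
  apply/ler_addgt0Pr => e' e'0.
  have [F0 fF0 HF0] := us y e' e'0.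
  have fF : finite_set (F0 `|` F1) by rewrite finite_setU.
  have := HF0 _ fF (@subsetUl _ F0 F1).
  have key : T (F0 `|` F1) y - T F1 y <= M * e.
    have := @fsum_le_sub R I (fun i => M * f i y ^+ 2 - b i y) F1 (F0 `|` F1) fF1 fF
      (@subsetUr _ F0 F1).
    have nn : forall i, 0 <= M * f i y ^+ 2 - b i y.
      move=> i; rewrite /b /gact subr_ge0.
      have := f0 i y; have := hM (act (inv (s i)) y); have := h0 (act (inv (s i)) y).
      rewrite expr2; nra.
    move=> /(_ nn); rewrite !fsumB // -!mulr_fsumr.
    have := sumsq_le1 gp y fF; have := HF1 y.
    rewrite /T.
    set QF := \sum_(i \in F0 `|` F1) f i y ^+ 2.
    set QF1 := \sum_(i \in F1) f i y ^+ 2.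
    move=> h1 h2 h3.
    have : 0 <= M * (1 - QF) by apply: mulr_ge0; lra.
    have : 0 <= M * (QF1 - (1 - e)) by apply: mulr_ge0; lra.
    nra.
  rewrite distrC; have := ler_norm (m y - T (F0 `|` F1) y).
  rewrite /T in key *; lra.
move=> x; apply/cvgrPdist_lt => eps eps0.
have e0 : 0 < eps / (3 * M) by apply: divr_gt0 => //; lra.
have [F1 [fF1 HF]] := unif _ e0.
have Me : M * (eps / (3 * M)) = eps / 3 by field; apply: lt0r_neq0.
rewrite Me in HF.
have /cvgrPdist_lt/(_ (eps / 3)) := fsum_cont fF1 bc (x:=x).
have e3 : 0 < eps / 3 by lra.
move=> /(_ e3); apply: filterS => y Hy.
have := HF x; have := HF y; have := Tle F1 x fF1; have := Tle F1 y fF1.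
move: Hy; rewrite /T ltr_norml => /andP [Hy1 Hy2].
rewrite ltr_norml; move=> *; apply/andP; split; lra.
Qed.

Unset Implicit Arguments.

Theorem mainTheorem16 (R : realType) (G : countType) (mul : G -> G -> G) (one : G)
    (inv : G -> G) (X : topologicalType) (act : G -> X -> X)
    (I : choiceType) (s : I -> G) (f : I -> X -> R) :
  is_group mul one inv ->
  compact [set: X] -> hausdorff_space X ->
  is_homeo_action mul one act ->
  minimal_action act ->
  is_gen_prob_measure s f ->
  full_support s f ->
  forall tau : (X -> R) -> R,
    is_state tau -> is_stationary inv act s f tau -> is_faithful tau.
Proof.
move=> grp cpt _ hact mini gp fs tau st stat h hc h0 [x0 hx0].
have [lin pos t1] := st.
rewrite ltNge; apply/negP => htau.
have f0 : forall i x, 0 <= f i x by case: gp.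
have fc : forall i, continuous (f i) by case: gp.
have [M [M0 hM]] := cont_bound cpt hc.
have hgc : forall g, continuous (fun x => h (act (inv g) x)).
  by case: hact => _ _ actc g x; apply: continuous_comp; [apply: actc|apply: hc].
have mc := @mu_cont R G X I mul one inv act s f h M cpt hact gp hc h0 M0 hM.
have us := @mu_us R G X I inv act s f h M gp h0 hM.
have tm : tau (mu_apply inv act s f h) = tau h := stat h hc.
set m := mu_apply inv act s f h in mc us tm.
have Hg : forall g, tau (fun y => h (act (inv g) y)) = 0.
  move=> g; have [d d0 Hd] := fs g.
  have sqc : forall i, continuous (fun x => f i x ^+ 2) by move=> i; apply: contM.
  have sq0 : forall i x, 0 <= f i x ^+ 2 by move=> i x; apply: sqr_ge0.
  have e0 : 0 < d / 2 by lra.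
  have [F [fF FA HF]] := @dini R X I [set i | s i = g] (fun i x => f i x ^+ 2) d (d / 2)
    cpt sqc sq0 e0 Hd.
  have le1 : forall y, d / 2 * h (act (inv g) y) <= m y.
    move=> y.
    have nn : forall i, 0 <= f i y * gact inv act (s i) h y * f i y.
      by move=> i; rewrite /gact; apply: mulr_ge0 => //; apply: mulr_ge0.
    have := @us_ge R I (fun i => f i y * gact inv act (s i) h y * f i y) (m y) nn (us y) F fF.
    have -> : \sum_(i \in F) (f i y * gact inv act (s i) h y * f i y) =
        (\sum_(i \in F) f i y ^+ 2) * h (act (inv g) y).
      rewrite mulr_fsuml; apply: eq_fsbigr => i /set_mem /FA /= sig.
      by rewrite /gact sig expr2 mulrAC.
    have := HF y; have := h0 (act (inv g) y).
    set S := \sum_(i \in F) f i y ^+ 2; set H := h (act (inv g) y).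
    move=> H0 HS HSm.
    have : 0 <= (S - d / 2) * H by apply: mulr_ge0 => //; lra.
    lra.
  have := @tau_mono R X tau (fun y => d / 2 * h (act (inv g) y)) m st
    (contM (@cst_continuous _ _ _) (hgc g)) mc le1.
  rewrite (tauZ (d / 2) st (hgc g)).
  have := pos _ (hgc g) (fun y => h0 _).
  move=> tp H; apply/eqP; rewrite eq_le tp andbT.
  have : d / 2 * tau (fun y => h (act (inv g) y)) <= 0 by lra.
  by rewrite pmulr_rle0.
have invK : forall g, inv (inv g) = g.
  case: grp => assoc one_l one_r invl invr g.
  have := one_r (inv (inv g)); rewrite -(invl g) assoc invl one_l.
  by move=> H; rewrite {2}H.
pose D := [set p : G * R | 0 < p.2].
pose V := fun p : G * R => [set y | p.2 < h (act (inv p.1) y)].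
have Vo : forall p, D p -> open (V p) by move=> p _; apply: open_gt_cont; apply: hgc.
have Vc : forall y, exists2 p, D p & V p y.
  move=> y.
  have cl : closure (range (fun g => act g y)) x0 by rewrite mini.
  have Uo : open [set z | 0 < h z] by apply: open_gt_cont.
  have Ux : 0 < h x0 by rewrite lt_neqAle eq_sym hx0 h0.
  have [z [[g _ <-] Uz]] := cl _ (open_nbhs_nbhs (conj Uo Ux)).
  exists (inv g, h (act g y) / 2); rewrite /D /V /=.
    by apply: divr_gt0; [exact: Uz|lra].
  by rewrite invK; move: Uz => /= Uz; lra.
have [D' [D'D cov]] := @cover_fin X (G * R)%type D V cpt Vo Vc.
pose k := fun y => \sum_(p <- D') p.2^-1 * h (act (inv p.1) y).
have kc : continuous k.
  by apply: seqsum_cont => p; apply: contM; [exact: cst_continuous|exact: hgc].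
have tk : tau k = 0.
  rewrite /k (@tau_sum R X tau (G * R)%type _ (fun p => p.2^-1)
     (fun p y => h (act (inv p.1) y)) st (fun p => hgc p.1)).
  by apply: big1 => p _; rewrite Hg mulr0.
have k1 : forall y, 1 <= k y.
  move=> y; have [p pD Vp] := cov y.
  rewrite /k (big_fsetD1 p pD) /=.
  have : 0 <= \sum_(q <- (D' `\ p)%fset) q.2^-1 * h (act (inv q.1) y).
    rewrite big_seq; apply: sumr_ge0 => q; rewrite in_fsetD1 => /andP [_ qD].
    apply: mulr_ge0 => //; rewrite invr_ge0; apply: ltW; exact: D'D.
  have p2 : 0 < p.2 := D'D p pD.
  rewrite /V /= in Vp.
  have : p.2^-1 * h (act (inv p.1) y) - 1 = (h (act (inv p.1) y) - p.2) / p.2.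
    by field; apply: lt0r_neq0.
  have : 0 < (h (act (inv p.1) y) - p.2) / p.2 by apply: divr_gt0 => //; lra.
  lra.
have := @tau_mono R X tau (fun _ => 1) k st (@cst_continuous _ _ _) kc k1.
rewrite t1 tk; lra.
Qed.
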